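(* Let $\Delta>1$, let $\varepsilon=1/100$ and $\hat p=\Delta^{-3/4-5\varepsilon}$, and let $\delta,\nu\ge 0$. Let $G$ be a graph, $v$ a vertex of $G$, $L$ a finite set, and $p:V(G)\times L\to[0,\infty)$ a function such that for every $\gamma\in L$ either $p(v,\gamma)=0$ or $p(v,\gamma)\ge 1/\Delta$. Define $p_a(v,\gamma)=p(v,\gamma)$ if $p(v,\gamma)\le\hat p$ and $p_a(v,\gamma)=0$ otherwise, and $p_c(v,\gamma)=p_a(v,\gamma)$ if $\sum_{u\sim v}p(u,\gamma)\le 100\ln\Delta$ and $p_c(v,\gamma)=0$ otherwise. Suppose $$h(v,p):=-\sum_{\gamma\in L:\,p(v,\gamma)>0}p(v,\gamma)\ln p(v,\gamma)\ \ge\ (1-\delta)\ln\Delta\quad\text{and}\quad \sum_{\gamma\in L}p(v,\gamma)\in[1-\nu,1+\nu].$$ Then $\sum_{\gamma}p_a(v,\gamma)\ge 1-6(\delta+\nu)$. If in addition $\xi(v,p):=\sum_{u\sim v}\sum_{\gamma\in L}p(u,\gamma)p(v,\gamma)\le 2K$ for some $0<K\le\ln\Delta$, then $\sum_\gamma p_c(v,\gamma)\ge 1-6(\delta+\nu)-2\varepsilon$.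
   Context: $u\sim v$ means $u$ is adjacent to $v$ in $G$; $\ln$ is the natural logarithm. *)

(* Defs.v *)
From Stdlib Require Import Reals List.
Import ListNotations.
Open Scope R_scope.

Definition sumR {A : Type} (l : list A) (f : A -> R) : R :=
  fold_right (fun x acc => f x + acc) 0 l.

Definition eps : R := 1 / 100.

Definition phat (Delta : R) : R := Rpower Delta (- (3 / 4) - 5 * eps).

Definition p_a {V C : Type} (Delta : R) (p : V -> C -> R) (v : V) (g : C) : R :=
  if Rle_dec (p v g) (phat Delta) then p v g else 0.

Definition p_c {V C : Type} (Delta : R) (p : V -> C -> R) (nbrs : list V)
  (v : V) (g : C) : R :=
  if Rle_dec (sumR nbrs (fun u => p u g)) (100 * ln Delta)
  then p_a Delta p v g else 0.

Definition hent {V C : Type} (L : list C) (p : V -> C -> R) (v : V) : R :=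
  - sumR L (fun g => if Rlt_dec 0 (p v g) then p v g * ln (p v g) else 0).

Definition xi {V C : Type} (L : list C) (p : V -> C -> R) (nbrs : list V)
  (v : V) : R :=
  sumR nbrs (fun u => sumR L (fun g => p u g * p v g)).

(* Main.v *)
Require Import Defs.
From Stdlib Require Import Reals List Lra.
Open Scope R_scope.

Lemma sumR_nil {A} (f : A -> R) : sumR nil f = 0.
Proof. reflexivity. Qed.
Lemma sumR_cons {A} (x : A) l f : sumR (x :: l) f = f x + sumR l f.
Proof. reflexivity. Qed.

Lemma sumR_plus {A} (l : list A) f g :
  sumR l (fun x => f x + g x) = sumR l f + sumR l g.
Proof. induction l; simpl; [lra|]. rewrite IHl. lra. Qed.

Lemma sumR_scal {A} (l : list A) c f :
  sumR l (fun x => c * f x) = c * sumR l f.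
Proof. induction l; simpl; [lra|]. rewrite IHl. lra. Qed.

Lemma sumR_opp {A} (l : list A) f :
  sumR l (fun x => - f x) = - sumR l f.
Proof. induction l; simpl; [lra|]. rewrite IHl. lra. Qed.

Lemma sumR_le {A} (l : list A) f g :
  (forall x, In x l -> f x <= g x) -> sumR l f <= sumR l g.
Proof.
  induction l; simpl; intros H; [lra|].
  assert (f a <= g a) by (apply H; auto).
  assert (sumR l f <= sumR l g) by (apply IHl; auto). lra.
Qed.

Lemma sumR_ext {A} (l : list A) f g :
  (forall x, In x l -> f x = g x) -> sumR l f = sumR l g.
Proof.
  induction l; simpl; intros H; [lra|].
  rewrite (H a) by auto. rewrite IHl; auto.
Qed.

Lemma sumR_swap {A B} (l1 : list A) (l2 : list B) F :
  sumR l1 (fun u => sumR l2 (fun g => F u g)) =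
  sumR l2 (fun g => sumR l1 (fun u => F u g)).
Proof.
  induction l1; simpl.
  - induction l2; simpl; [lra|]. rewrite <- IHl2. lra.
  - rewrite IHl1. rewrite <- sumR_plus. reflexivity.
Qed.

Theorem mainTheorem8
  (V C : Type) (adj : V -> V -> Prop)
  (adj_sym : forall x y, adj x y -> adj y x)
  (adj_irr : forall x, ~ adj x x)
  (v : V) (nbrs : list V) (nbrs_nodup : NoDup nbrs)
  (nbrs_spec : forall u, In u nbrs <-> adj v u)
  (L : list C) (L_nodup : NoDup L)
  (p : V -> C -> R) (p_nonneg : forall u g, 0 <= p u g)
  (Delta delta nu : R) (hDelta : 1 < Delta)
  (hdelta : 0 <= delta) (hnu : 0 <= nu)
  (hp_v : forall g, In g L -> p v g = 0 \/ p v g >= 1 / Delta)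
  (hh : hent L p v >= (1 - delta) * ln Delta)
  (hsum1 : 1 - nu <= sumR L (fun g => p v g))
  (hsum2 : sumR L (fun g => p v g) <= 1 + nu) :
  sumR L (fun g => p_a Delta p v g) >= 1 - 6 * (delta + nu) /\
  (forall K : R, 0 < K -> K <= ln Delta -> xi L p nbrs v <= 2 * K ->
     sumR L (fun g => p_c Delta p nbrs v g) >= 1 - 6 * (delta + nu) - 2 * eps).
Proof.
  assert (hD0 : 0 < Delta) by lra.
  assert (hl : 0 < ln Delta) by (rewrite <- ln_1; apply ln_increasing; lra).
  assert (hph : 0 < phat Delta) by (unfold phat, Rpower; apply exp_pos).
  assert (hlph : ln (phat Delta) = - (8/10) * ln Delta).
  { unfold phat, Rpower. rewrite ln_exp. unfold eps. field. }
  set (A := sumR L (fun g => p_a Delta p v g)).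
  set (T := sumR L (fun g => p v g)).
  assert (HA : A >= 1 - 6 * (delta + nu)).
  { assert (Hpt : forall g, In g L ->
       - (if Rlt_dec 0 (p v g) then p v g * ln (p v g) else 0)
       <= ln Delta * ((2/10) * p_a Delta p v g + (8/10) * p v g)).
    { intros g Hg. unfold p_a.
      destruct (hp_v g Hg) as [H0|H1].
      - rewrite H0. destruct (Rlt_dec 0 0); [lra|].
        destruct (Rle_dec 0 (phat Delta)); lra.
      - assert (Hpos : 0 < p v g).
        { assert (0 < 1 / Delta) by (apply Rdiv_lt_0_compat; lra). lra. }
        destruct (Rlt_dec 0 (p v g)); [|lra].
        destruct (Rle_dec (p v g) (phat Delta)).
        + assert (ln (1/Delta) <= ln (p v g)).
          { destruct (Req_dec (1/Delta) (p v g)) as [E|E]; [rewrite E; lra|].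
            left; apply ln_increasing; [apply Rdiv_lt_0_compat; lra| lra]. }
          unfold Rdiv in H. rewrite Rmult_1_l, ln_Rinv in H by lra.
          assert (p v g * (- ln (p v g)) <= p v g * ln Delta)
            by (apply Rmult_le_compat_l; lra).
          lra.
        + assert (ln (phat Delta) < ln (p v g)) by (apply ln_increasing; lra).
          assert (p v g * (- ln (p v g)) <= p v g * ((8/10) * ln Delta))
            by (apply Rmult_le_compat_l; lra).
          lra. }
    assert (Hs := sumR_le L _ _ Hpt).
    rewrite sumR_opp in Hs. unfold hent in hh.
    rewrite sumR_scal, sumR_plus, !sumR_scal in Hs. change (sumR L (p_a Delta p v)) with A in Hs. change (sumR L (p v)) with T in Hs.
    assert (ln Delta * (1 - delta) <= ln Delta * ((2/10) * A + (8/10) * T)) by lra.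
    apply Rmult_le_reg_l in H; [|lra]. change (sumR L (fun g : C => p v g)) with T in hsum2. lra. }
  split; [exact HA|].
  intros K HK HKl Hxi.
  set (S := fun g => sumR nbrs (fun u => p u g)).
  assert (Hxi' : xi L p nbrs v = sumR L (fun g => p v g * S g)).
  { unfold xi. rewrite sumR_swap. apply sumR_ext. intros g _.
    unfold S. rewrite <- sumR_scal. apply sumR_ext. intros; lra. }
  assert (Hpt : forall g, In g L ->
     100 * ln Delta * (p_a Delta p v g - p_c Delta p nbrs v g) <= p v g * S g).
  { intros g Hg.
    assert (HS0 : 0 <= S g).
    { unfold S. clear -p_nonneg. induction nbrs; simpl; [lra|].
      pose proof (p_nonneg a g). lra. }
    assert (Hpa : 0 <= p_a Delta p v g <= p v g).
    { unfold p_a. destruct Rle_dec; pose proof (p_nonneg v g); lra. }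
    pose proof (p_nonneg v g).
    unfold p_c. fold (S g). destruct Rle_dec.
    - replace (p_a Delta p v g - p_a Delta p v g) with 0 by ring.
      rewrite Rmult_0_r. apply Rmult_le_pos; lra.
    - rewrite Rminus_0_r.
      assert (100 * ln Delta * p_a Delta p v g <= S g * p_a Delta p v g)
        by (apply Rmult_le_compat_r; lra).
      assert (S g * p_a Delta p v g <= S g * p v g)
        by (apply Rmult_le_compat_l; lra).
      lra. }
  assert (Hs := sumR_le L _ _ Hpt).
  rewrite sumR_scal, <- Hxi' in Hs.
  unfold Rminus in Hs. rewrite sumR_plus, sumR_opp in Hs. fold A in Hs.
  set (Cs := sumR L (fun g => p_c Delta p nbrs v g)) in *.
  change (sumR L (p_a Delta p v)) with A in Hs. assert (ln Delta * (100 * (A + - Cs)) <= ln Delta * 2) by lra.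
  apply Rmult_le_reg_l in H; [|lra]. unfold eps. lra.
Qed.
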